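(* Let $\langle B,\wedge,{}'\rangle$ be an algebra with $\wedge$ binary and ${}'$ unary satisfying $x\wedge(y\wedge z)\approx (y\wedge x)\wedge z$ and $x\approx (x'\wedge y)'\wedge(x'\wedge y')'$. Then $x\wedge[y\wedge(z\wedge u)]=y\wedge[x\wedge(z\wedge u)]$ for all $x,y,z,u\in B$. *)


Theorem lemma6p13 (B : Type) (meet : B -> B -> B) (c : B -> B)
  (H1 : forall x y z : B, meet x (meet y z) = meet (meet y x) z)
  (H2 : forall x y : B, x = meet (c (meet (c x) y)) (c (meet (c x) (c y)))) :
  forall x y z u : B, meet x (meet y (meet z u)) = meet y (meet x (meet z u)).
Proof.
  intros gx gy gz gu.
  assert (S23 : forall a b c0 d : B, meet a (meet b (meet c0 d)) = meet a (meet c0 (meet b d))).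
  { intros a b c0 d. rewrite (H1 b c0 d), (H1 a (meet c0 b) d), (H1 a c0 (meet b d)), (H1 (meet c0 a) b d).
    rewrite <- (H1 b c0 a). reflexivity. }
  assert (E3 : forall v0 v1 v2 : B, (meet (meet v0 v1) v2) = (meet v1 (meet v0 v2))).
  { intros v0 v1 v2.
    refine (eq_trans (f_equal (fun h => h) (eq_sym (H1 v1 v0 v2))) _).
    reflexivity.
  }
  assert (E4 : forall v0 v1 : B, (meet (c (meet (c v0) v1)) (c (meet (c v0) (c v1)))) = v0).
  { intros v0 v1.
    refine (eq_trans (f_equal (fun h => h) (eq_sym (H2 v0 v1))) _).
    reflexivity.
  }
  assert (E7 : forall v0 v1 : B, (meet (c (meet (c (meet (c v0) v1)) (meet (c v0) (c v1)))) (c v0)) = (meet (c v0) v1)).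
  { intros v0 v1.
    refine (eq_trans (f_equal (fun h => (meet (c (meet (c (meet (c v0) v1)) (meet (c v0) (c v1)))) (c h))) (eq_sym (E4 v0 v1))) _).
    refine (eq_trans (f_equal (fun h => h) (E4 (meet (c v0) v1) (meet (c v0) (c v1)))) _).
    reflexivity.
  }
  assert (E5 : forall v0 v1 v2 : B, (meet (c (meet (c v0) (c v1))) (meet (c (meet (c v0) v1)) v2)) = (meet v0 v2)).
  { intros v0 v1 v2.
    refine (eq_trans (f_equal (fun h => h) (eq_sym (E3 (c (meet (c v0) v1)) (c (meet (c v0) (c v1))) v2))) _).
    refine (eq_trans (f_equal (fun h => (meet h v2)) (E4 v0 v1)) _).
    reflexivity.
  }
  assert (E18 : forall v0 v1 v2 : B, (meet (c v0) (meet (c (meet (c (meet (c v0) v1)) (meet (c v0) (c v1)))) v2)) = (meet v1 (meet (c v0) v2))).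
  { intros v0 v1 v2.
    refine (eq_trans (f_equal (fun h => (meet (c h) (meet (c (meet (c (meet (c v0) v1)) (meet (c v0) (c v1)))) v2))) (eq_sym (E4 v0 v1))) _).
    refine (eq_trans (f_equal (fun h => h) (E5 (meet (c v0) v1) (meet (c v0) (c v1)) v2)) _).
    refine (eq_trans (f_equal (fun h => h) (E3 (c v0) v1 v2)) _).
    reflexivity.
  }
  assert (E19 : forall v0 v1 : B, (meet (c v0) (meet (c v0) v1)) = (meet v1 (meet (c v0) (c v0)))).
  { intros v0 v1.
    refine (eq_trans (f_equal (fun h => (meet (c v0) h)) (eq_sym (E7 v0 v1))) _).
    refine (eq_trans (f_equal (fun h => h) (E18 v0 v1 (c v0))) _).
    reflexivity.
  }
  assert (E20 : forall v0 v1 : B, (meet (c (meet v0 (meet (c v1) (c v1)))) (c (meet (c v1) (c (meet (c v1) v0))))) = v1).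
  { intros v0 v1.
    refine (eq_trans (f_equal (fun h => (meet (c h) (c (meet (c v1) (c (meet (c v1) v0)))))) (eq_sym (E19 v1 v0))) _).
    refine (eq_trans (f_equal (fun h => h) (E4 v1 (meet (c v1) v0))) _).
    reflexivity.
  }
  assert (E41 : forall v0 v1 : B, (meet (c (meet (c v0) v1)) v0) = (meet v0 (c (meet (c v0) v1)))).
  { intros v0 v1.
    refine (eq_trans (f_equal (fun h => (meet (c (meet (c v0) v1)) h)) (eq_sym (E4 v0 v1))) _).
    refine (eq_trans (f_equal (fun h => h) (E19 (meet (c v0) v1) (c (meet (c v0) (c v1))))) _).
    refine (eq_trans (f_equal (fun h => h) (E5 v0 v1 (c (meet (c v0) v1)))) _).
    reflexivity.
  }
  assert (E45 : forall v0 v1 v2 : B, (meet (c (meet (c v0) v1)) (meet v0 v2)) = (meet v0 (meet (c (meet (c v0) v1)) v2))).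
  { intros v0 v1 v2.
    refine (eq_trans (f_equal (fun h => h) (eq_sym (E3 v0 (c (meet (c v0) v1)) v2))) _).
    refine (eq_trans (f_equal (fun h => (meet h v2)) (eq_sym (E41 v0 v1))) _).
    refine (eq_trans (f_equal (fun h => h) (E3 (c (meet (c v0) v1)) v0 v2)) _).
    reflexivity.
  }
  assert (E73 : forall v0 v1 v2 : B, (meet (c (meet v0 (meet (c v1) v2))) v1) = (meet v1 (c (meet v0 (meet (c v1) v2))))).
  { intros v0 v1 v2.
    refine (eq_trans (f_equal (fun h => (meet (c h) v1)) (eq_sym (E18 v1 v0 v2))) _).
    refine (eq_trans (f_equal (fun h => h) (E41 v1 (meet (c (meet (c (meet (c v1) v0)) (meet (c v1) (c v0)))) v2))) _).
    refine (eq_trans (f_equal (fun h => (meet v1 (c h))) (E18 v1 v0 v2)) _).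
    reflexivity.
  }
  assert (E80 : forall v0 v1 v2 : B, (meet (c (meet (c v0) (c (meet (c v1) v2)))) (meet v1 (c (meet (c v0) (meet (c v1) v2))))) = (meet v0 v1)).
  { intros v0 v1 v2.
    refine (eq_trans (f_equal (fun h => (meet (c (meet (c v0) (c (meet (c v1) v2)))) h)) (eq_sym (E73 (c v0) v1 v2))) _).
    refine (eq_trans (f_equal (fun h => h) (E5 v0 (meet (c v1) v2) v1)) _).
    reflexivity.
  }
  assert (E101 : forall v0 v1 v2 : B, (meet (c (meet v0 v1)) (meet (c v1) v2)) = (meet v2 (meet (c v1) (c (meet v0 v1))))).
  { intros v0 v1 v2.
    refine (eq_trans (f_equal (fun h => (meet (c (meet v0 h)) (meet (c v1) v2))) (eq_sym (E4 v1 v2))) _).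
    refine (eq_trans (f_equal (fun h => h) (E73 v0 (meet (c v1) v2) (c (meet (c v1) (c v2))))) _).
    refine (eq_trans (f_equal (fun h => h) (E3 (c v1) v2 (c (meet v0 (meet (c (meet (c v1) v2)) (c (meet (c v1) (c v2)))))))) _).
    refine (eq_trans (f_equal (fun h => (meet v2 (meet (c v1) (c (meet v0 h))))) (E4 v1 v2)) _).
    reflexivity.
  }
  assert (E102 : forall v0 v1 v2 v3 : B, (meet (c (meet v0 (meet v1 v2))) (meet (c v2) v3)) = (meet v3 (meet (c v2) (c (meet v0 (meet v1 v2)))))).
  { intros v0 v1 v2 v3.
    refine (eq_trans (f_equal (fun h => (meet (c h) (meet (c v2) v3))) (eq_sym (E3 v1 v0 v2))) _).
    refine (eq_trans (f_equal (fun h => h) (E101 (meet v1 v0) v2 v3)) _).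
    refine (eq_trans (f_equal (fun h => (meet v3 (meet (c v2) (c h)))) (E3 v1 v0 v2)) _).
    reflexivity.
  }
  assert (E79 : forall v0 v1 v2 v3 : B, (meet (c (meet v0 (meet (c v1) v2))) (meet v1 v3)) = (meet v1 (meet (c (meet v0 (meet (c v1) v2))) v3))).
  { intros v0 v1 v2 v3.
    refine (eq_trans (f_equal (fun h => h) (eq_sym (E3 v1 (c (meet v0 (meet (c v1) v2))) v3))) _).
    refine (eq_trans (f_equal (fun h => (meet h v3)) (eq_sym (E73 v0 v1 v2))) _).
    refine (eq_trans (f_equal (fun h => h) (E3 (c (meet v0 (meet (c v1) v2))) v1 v3)) _).
    reflexivity.
  }
  assert (E128 : forall v0 v1 : B, (meet v0 (c v1)) = (meet (c v1) v0)).
  { intros v0 v1.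
    refine (eq_trans (f_equal (fun h => h) (eq_sym (E80 v0 (c v1) v1))) _).
    refine (eq_trans (f_equal (fun h => h) (eq_sym (E102 (c v0) (c (c v1)) v1 (c (meet (c v0) (c (meet (c (c v1)) v1))))))) _).
    refine (eq_trans (f_equal (fun h => h) (E79 (c v0) (c v1) v1 (c (meet (c v0) (c (meet (c (c v1)) v1)))))) _).
    refine (eq_trans (f_equal (fun h => (meet (c v1) h)) (E4 v0 (meet (c (c v1)) v1))) _).
    reflexivity.
  }
  assert (E152 : forall v0 v1 v2 : B, (meet v0 (meet v1 (c v2))) = (meet (c v2) (meet v1 v0))).
  { intros v0 v1 v2.
    refine (eq_trans (f_equal (fun h => h) (eq_sym (E3 v1 v0 (c v2)))) _).
    refine (eq_trans (f_equal (fun h => h) (E128 (meet v1 v0) v2)) _).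
    reflexivity.
  }
  assert (E30 : forall v0 v1 v2 : B, (meet (c (meet (c v0) (c (meet (c v0) v1)))) (meet (c (meet v1 (meet (c v0) (c v0)))) v2)) = (meet v0 v2)).
  { intros v0 v1 v2.
    refine (eq_trans (f_equal (fun h => (meet (c (meet (c v0) (c (meet (c v0) v1)))) (meet (c h) v2))) (eq_sym (E19 v0 v1))) _).
    refine (eq_trans (f_equal (fun h => h) (E5 v0 (meet (c v0) v1) v2)) _).
    reflexivity.
  }
  assert (E154 : forall v0 v1 : B, (meet v0 v1) = (meet v1 v0)).
  { intros v0 v1.
    refine (eq_trans (f_equal (fun h => (meet v0 h)) (eq_sym (E20 (c v0) v1))) _).
    refine (eq_trans (f_equal (fun h => h) (eq_sym (E45 v0 (meet (c v1) (c v1)) (c (meet (c v1) (c (meet (c v1) (c v0)))))))) _).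
    refine (eq_trans (f_equal (fun h => h) (eq_sym (E152 (c (meet (c v1) (c (meet (c v1) (c v0))))) v0 (meet (c v0) (meet (c v1) (c v1)))))) _).
    refine (eq_trans (f_equal (fun h => (meet (c (meet (c v1) (c (meet (c v1) (c v0))))) h)) (eq_sym (E41 v0 (meet (c v1) (c v1))))) _).
    refine (eq_trans (f_equal (fun h => h) (E30 v1 (c v0) v0)) _).
    reflexivity.
  }
  assert (E191 : forall v0 v1 v2 : B, (meet v0 (meet v1 v2)) = (meet v1 (meet v0 v2))).
  { intros v0 v1 v2.
    refine (eq_trans (f_equal (fun h => h) (eq_sym (E3 v1 v0 v2))) _).
    refine (eq_trans (f_equal (fun h => (meet h v2)) (eq_sym (E154 v0 v1))) _).
    refine (eq_trans (f_equal (fun h => h) (E3 v0 v1 v2)) _).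
    reflexivity.
  }
  assert (E157 : forall v0 v1 v2 : B, (meet v0 (meet v1 v2)) = (meet v2 (meet v1 v0))).
  { intros v0 v1 v2.
    refine (eq_trans (f_equal (fun h => h) (eq_sym (E3 v1 v0 v2))) _).
    refine (eq_trans (f_equal (fun h => h) (E154 (meet v1 v0) v2)) _).
    reflexivity.
  }
    refine (eq_trans (f_equal (fun h => h) (E191 gx gy (meet gz gu))) _).
    refine (eq_trans (f_equal (fun h => (meet gy h)) (E157 gx gz gu)) _).
    refine (eq_trans (f_equal (fun h => h) (E191 gy gu (meet gz gx))) _).
    refine (eq_trans (f_equal (fun h => (meet gu h)) (E191 gy gz gx)) _).
    refine (eq_trans (f_equal (fun h => (meet gu h)) (eq_sym (E191 gy gz gx))) _).
    refine (eq_trans (f_equal (fun h => h) (eq_sym (E191 gy gu (meet gz gx)))) _).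
    refine (eq_trans (f_equal (fun h => (meet gy h)) (eq_sym (E157 gx gz gu))) _).
    reflexivity.

Qed.
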